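(* Let $Y$ be a fixed point combinator, and let $A_Y \equiv Y(\lambda z.\, f^\star z z)$ where $f^\star$ is a marked variable not occurring in $Y$. For every $M$ with $A_Y \twoheadrightarrow_\beta M$ there exists a balanced $N$ with $M \twoheadrightarrow_\beta N$.
   Context: Untyped $\lambda$-calculus modulo $\alpha$. A fixed point combinator is a term $Y$ with $Yx=_\beta x(Yx)$ for a variable $x$ not free in $Y$. The variable $f^\star$ marks the displayed occurrence of $f$ in $Y(\lambda z.fzz)$; its free occurrences in reducts of $A_Y$ are the descendants of that occurrence. A reduct $M$ of $A_Y$ is balanced if for every subterm of $M$ of the form $f^\star\, s\, t$ one has $s\equiv t$ (syntactic equality modulo $\alpha$). *)

(* Defs.v *)
(* Untyped lambda calculus, de Bruijn indices (so syntactic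
   equality is equality modulo alpha), with an extra constant [Mark]
   representing the marked free variable f^star. *)
From Stdlib Require Import Arith Relations.

Inductive term : Type :=
| Var : nat -> term
| App : term -> term -> term
| Lam : term -> term
| Mark : term.

Fixpoint lift (k c : nat) (t : term) : term :=
  match t with
  | Var n => if n <? c then Var n else Var (n + k)
  | App t1 t2 => App (lift k c t1) (lift k c t2)
  | Lam t1 => Lam (lift k (S c) t1)
  | Mark => Mark
  end.

Fixpoint subst (j : nat) (s : term) (t : term) : term :=
  match t with
  | Var n => if n =? j then lift j 0 s
             else if j <? n then Var (pred n) else Var n
  | App t1 t2 => App (subst j s t1) (subst j s t2)
  | Lam t1 => Lam (subst (S j) s t1)
  | Mark => Mark
  end.

Inductive beta : term -> term -> Prop :=
| beta_redex : forall t u, beta (App (Lam t) u) (subst 0 u t)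
| beta_appl : forall t t' u, beta t t' -> beta (App t u) (App t' u)
| beta_appr : forall t u u', beta u u' -> beta (App t u) (App t u')
| beta_lam : forall t t', beta t t' -> beta (Lam t) (Lam t').

Definition beta_star : term -> term -> Prop := clos_refl_trans term beta.
Definition beta_eq : term -> term -> Prop := clos_refl_sym_trans term beta.

Fixpoint free_in (n : nat) (t : term) : bool :=
  match t with
  | Var m => m =? n
  | App t1 t2 => free_in n t1 || free_in n t2
  | Lam t1 => free_in (S n) t1
  | Mark => false
  end.

Fixpoint has_mark (t : term) : bool :=
  match t with
  | Var _ => false
  | App t1 t2 => has_mark t1 || has_mark t2
  | Lam t1 => has_mark t1
  | Mark => true
  end.

Definition fixed_point_combinator (Y : term) : Prop :=
  exists x : nat, free_in x Y = false /\
    beta_eq (App Y (Var x)) (App (Var x) (App Y (Var x))).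

Definition A_ (Y : term) : term := App Y (Lam (App (App Mark (Var 0)) (Var 0))).

Inductive subterm : term -> term -> Prop :=
| sub_refl : forall t, subterm t t
| sub_appl : forall s t u, subterm s t -> subterm s (App t u)
| sub_appr : forall s t u, subterm s u -> subterm s (App t u)
| sub_lam : forall s t, subterm s t -> subterm s (Lam t).

Definition balanced (M : term) : Prop :=
  forall s t, subterm (App (App Mark s) t) M -> s = t.

(* Main.v *)
Require Import Defs.
From Stdlib Require Import Arith Relations Lia.

Inductive tm : Type :=
| TVar : nat -> tm
| TApp : tm -> tm -> tm
| TLam : tm -> tm
| TG : tm -> tm.

Fixpoint tlift (k c : nat) (t : tm) : tm :=
  match t with
  | TVar n => if n <? c then TVar n else TVar (n + k)
  | TApp t1 t2 => TApp (tlift k c t1) (tlift k c t2)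
  | TLam t1 => TLam (tlift k (S c) t1)
  | TG t1 => TG (tlift k c t1)
  end.

Fixpoint tsubst (j : nat) (s : tm) (t : tm) : tm :=
  match t with
  | TVar n => if n =? j then tlift j 0 s
             else if j <? n then TVar (pred n) else TVar n
  | TApp t1 t2 => TApp (tsubst j s t1) (tsubst j s t2)
  | TLam t1 => TLam (tsubst (S j) s t1)
  | TG t1 => TG (tsubst j s t1)
  end.

Ltac arith := repeat (simpl; match goal with
 | |- context [?a =? ?b] => destruct (Nat.eqb_spec a b)
 | |- context [?a <? ?b] => destruct (Nat.ltb_spec a b)
 end); try (f_equal; lia); try lia.

Lemma lift_lift_comm : forall u k j c c', c' <= c ->
  tlift k (j + c) (tlift j c' u) = tlift j c' (tlift k c u).
Proof.
  induction u; intros; simpl.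
  - arith.
  - f_equal; auto.
  - f_equal. replace (S (j + c)) with (j + S c) by lia. apply IHu; lia.
  - f_equal; auto.
Qed.

Lemma lift_lift_merge : forall u i j c c', c' <= c -> c <= c' + j ->
  tlift i c (tlift j c' u) = tlift (i + j) c' u.
Proof.
  induction u; intros; simpl.
  - arith.
  - f_equal; auto.
  - f_equal. apply IHu; lia.
  - f_equal; auto.
Qed.

Lemma lift_subst : forall t u k j c,
  tlift k (j + c) (tsubst j u t) = tsubst j (tlift k c u) (tlift k (S (j + c)) t).
Proof.
  induction t; intros; simpl.
  - arith; subst. apply (lift_lift_comm u k j c 0). lia.
  - f_equal; auto.
  - f_equal. replace (S (j + c)) with (S j + c) by lia. rewrite IHt. f_equal.
  - f_equal; auto.
Qed.

Lemma subst_lift : forall v u i j c, c <= j ->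
  tsubst (i + j) u (tlift i c v) = tlift i c (tsubst j u v).
Proof.
  induction v; intros; simpl.
  - arith; subst. rewrite lift_lift_merge by lia. f_equal; lia.
  - f_equal; auto.
  - f_equal. replace (S (i + j)) with (i + S j) by lia. apply IHv; lia.
  - f_equal; auto.
Qed.

Lemma subst_lift_cancel : forall t w i k c, c <= i -> i <= c + k ->
  tsubst i w (tlift (S k) c t) = tlift k c t.
Proof.
  induction t; intros; simpl.
  - arith.
  - f_equal; auto.
  - f_equal. apply IHt; lia.
  - f_equal; auto.
Qed.

Lemma subst_subst : forall t u v i j,
  tsubst (i + j) u (tsubst i v t) = tsubst i (tsubst j u v) (tsubst (S (i + j)) u t).
Proof.
  induction t; intros; simpl.
  - arith; subst.
    + rewrite (subst_lift v u i j 0) by lia. reflexivity.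
    + rewrite subst_lift_cancel by lia. f_equal; lia.
  - f_equal; auto.
  - f_equal. replace (S (i + j)) with (S i + j) by lia. rewrite IHt. f_equal.
  - f_equal; auto.
Qed.
Inductive tbeta : tm -> tm -> Prop :=
| tbeta_redex : forall t u, tbeta (TApp (TLam t) u) (tsubst 0 u t)
| tbeta_appl : forall t t' u, tbeta t t' -> tbeta (TApp t u) (TApp t' u)
| tbeta_appr : forall t u u', tbeta u u' -> tbeta (TApp t u) (TApp t u')
| tbeta_lam : forall t t', tbeta t t' -> tbeta (TLam t) (TLam t')
| tbeta_g : forall t t', tbeta t t' -> tbeta (TG t) (TG t').

Definition tstar := clos_refl_trans tm tbeta.

Lemma tstar_appl : forall t t' u, tstar t t' -> tstar (TApp t u) (TApp t' u).
Proof. induction 1; [apply rt_step; constructor; auto | apply rt_refl | eapply rt_trans; eauto]. Qed.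
Lemma tstar_appr : forall t u u', tstar u u' -> tstar (TApp t u) (TApp t u').
Proof. induction 1; [apply rt_step; constructor; auto | apply rt_refl | eapply rt_trans; eauto]. Qed.
Lemma tstar_lam : forall t t', tstar t t' -> tstar (TLam t) (TLam t').
Proof. induction 1; [apply rt_step; constructor; auto | apply rt_refl | eapply rt_trans; eauto]. Qed.
Lemma tstar_g : forall t t', tstar t t' -> tstar (TG t) (TG t').
Proof. induction 1; [apply rt_step; constructor; auto | apply rt_refl | eapply rt_trans; eauto]. Qed.

Lemma tbeta_lift : forall t t', tbeta t t' -> forall k c, tbeta (tlift k c t) (tlift k c t').
Proof.
  induction 1; intros; simpl; try (constructor; auto).
  pose proof (lift_subst t u k 0 c) as E; simpl in E; rewrite E. constructor.
Qed.

Lemma tbeta_subst : forall t t', tbeta t t' -> forall u j, tbeta (tsubst j u t) (tsubst j u t').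
Proof.
  induction 1; intros; simpl; try (constructor; auto).
  pose proof (subst_subst t u0 u 0 j) as E; simpl in E; rewrite E. constructor.
Qed.

Lemma tstar_lift : forall t t', tstar t t' -> forall k c, tstar (tlift k c t) (tlift k c t').
Proof. induction 1; intros; [apply rt_step; apply tbeta_lift; auto | apply rt_refl | eapply rt_trans; [apply IHclos_refl_trans1 | apply IHclos_refl_trans2]]. Qed.
Lemma tstar_subst : forall t t', tstar t t' -> forall u j, tstar (tsubst j u t) (tsubst j u t').
Proof. induction 1; intros; [apply rt_step; apply tbeta_subst; auto | apply rt_refl | eapply rt_trans; [apply IHclos_refl_trans1 | apply IHclos_refl_trans2]]. Qed.

Inductive par : tm -> tm -> Prop :=
| par_var n : par (TVar n) (TVar n)
| par_app t t' u u' : par t t' -> par u u' -> par (TApp t u) (TApp t' u')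
| par_lam t t' : par t t' -> par (TLam t) (TLam t')
| par_g t t' : par t t' -> par (TG t) (TG t')
| par_beta t t' u u' : par t t' -> par u u' -> par (TApp (TLam t) u) (tsubst 0 u' t').

Lemma par_refl : forall t, par t t.
Proof. induction t; constructor; auto. Qed.

Lemma tbeta_par : forall t t', tbeta t t' -> par t t'.
Proof. induction 1; constructor; auto using par_refl. Qed.

Lemma par_tstar : forall t t', par t t' -> tstar t t'.
Proof.
  induction 1.
  - apply rt_refl.
  - eapply rt_trans; [apply tstar_appl; eauto | apply tstar_appr; eauto].
  - apply tstar_lam; auto.
  - apply tstar_g; auto.
  - eapply rt_trans; [apply tstar_appl; apply tstar_lam; eauto|].
    eapply rt_trans; [apply tstar_appr; eauto|]. apply rt_step; constructor.
Qed.

Lemma par_lift : forall t t', par t t' -> forall k c, par (tlift k c t) (tlift k c t').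
Proof.
  induction 1; intros; simpl.
  - destruct (n <? c); constructor.
  - constructor; auto.
  - constructor; auto.
  - constructor; auto.
  - pose proof (lift_subst t' u' k 0 c) as E; simpl in E; rewrite E. constructor; auto.
Qed.

Lemma par_subst : forall t t', par t t' -> forall u u', par u u' -> forall j,
  par (tsubst j u t) (tsubst j u' t').
Proof.
  induction 1; intros; simpl.
  - destruct (n =? j); [apply par_lift; auto|]. destruct (j <? n); constructor.
  - constructor; auto.
  - constructor; auto.
  - constructor; auto.
  - pose proof (subst_subst t' u'0 u' 0 j) as E; simpl in E; rewrite E. constructor; auto.
Qed.

Fixpoint cd (t : tm) : tm :=
  match t with
  | TVar n => TVar n
  | TApp t1 u => match t1 with
                 | TLam b => tsubst 0 (cd u) (cd b)
                 | _ => TApp (cd t1) (cd u)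
                 end
  | TLam t1 => TLam (cd t1)
  | TG t1 => TG (cd t1)
  end.

Lemma par_cd : forall t t', par t t' -> par t' (cd t).
Proof.
  induction 1; simpl.
  - constructor.
  - destruct t; try (constructor; auto; fail).
    inversion H; subst. inversion IHpar1; subst. constructor; auto.
  - constructor; auto.
  - constructor; auto.
  - apply par_subst; auto.
Qed.

Lemma strip : forall a c, tstar a c -> forall b, par a b -> exists d, tstar b d /\ par c d.
Proof.
  intros a c H. apply clos_rt_rt1n in H. induction H; intros b Hb.
  - exists b; split; [apply rt_refl | auto].
  - assert (Hy : par y (cd x)) by (apply par_cd, tbeta_par; auto).
    destruct (IHclos_refl_trans_1n _ Hy) as [d [Hd1 Hd2]].
    exists d; split; auto. eapply rt_trans; [apply par_tstar, par_cd; exact Hb | auto].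
Qed.

Lemma CR : forall a b, tstar a b -> forall c, tstar a c -> exists d, tstar b d /\ tstar c d.
Proof.
  intros a b H. apply clos_rt_rt1n in H. induction H; intros c Hc.
  - exists c; split; [auto | apply rt_refl].
  - destruct (strip _ _ Hc y (tbeta_par _ _ H)) as [d1 [Hd1 Hd2]].
    destruct (IHclos_refl_trans_1n d1 Hd1) as [d [? ?]].
    exists d; split; auto. eapply rt_trans; [apply par_tstar; eauto | auto].
Qed.
Inductive D : term -> tm -> Prop :=
| D_var n : D (Var n) (TVar n)
| D_app M1 M2 P1 P2 : D M1 P1 -> D M2 P2 -> D (App M1 M2) (TApp P1 P2)
| D_lam M P : D M P -> D (Lam M) (TLam P)
| D_g A B Q Q1 Q2 : tstar Q Q1 -> tstar Q Q2 -> D A Q1 -> D B Q2 ->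
    D (App (App Mark A) B) (TG Q).

Lemma D_lift : forall M P, D M P -> forall k c, D (lift k c M) (tlift k c P).
Proof.
  induction 1; intros; simpl.
  - destruct (n <? c); constructor.
  - constructor; auto.
  - constructor; auto.
  - eapply D_g; [apply tstar_lift; exact H | apply tstar_lift; exact H0 | apply IHD1 | apply IHD2].
Qed.

Lemma D_subst : forall M P, D M P -> forall u U j, D u U -> D (subst j u M) (tsubst j U P).
Proof.
  induction 1; intros; simpl.
  - destruct (n =? j); [apply D_lift; auto|]. destruct (j <? n); constructor.
  - constructor; auto.
  - constructor; auto.
  - eapply D_g; [apply tstar_subst; exact H | apply tstar_subst; exact H0 | apply IHD1; auto | apply IHD2; auto].
Qed.

Fixpoint size (t : term) : nat :=
  match t with
  | Var _ => 1
  | App a b => S (size a + size b)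
  | Lam a => S (size a)
  | Mark => 1
  end.

Lemma D_step : forall n M, size M < n -> forall M' P, beta M M' -> D M P ->
  exists P', tstar P P' /\ D M' P'.
Proof.
  induction n; intros M Hs M' P Hb HD; [lia|].
  destruct M; simpl in Hs.
  - inversion Hb.
  - inversion Hb; subst.
    + inversion HD; subst.
      match goal with H : D (Lam _) _ |- _ => inversion H; subst end.
      eexists; split; [apply rt_step; constructor | apply D_subst; auto].
    + match goal with H : beta M1 _ |- _ => rename H into Hst end.
      inversion HD; subst.
      * match goal with H1 : D M1 ?A, H2 : D M2 ?B |- _ =>
          destruct (IHn M1 ltac:(lia) _ _ Hst H1) as [P' [? ?]];
          exists (TApp P' B); split; [apply tstar_appl; auto | constructor; auto] end.
      * simpl in Hs. inversion Hst; subst;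
        [match goal with H : beta Mark _ |- _ => inversion H end|].
        match goal with H : beta A _ |- _ => rename H into HA end.
        match goal with H1 : tstar Q ?Q1, H2 : D A ?Q1 |- _ =>
          destruct (IHn A ltac:(lia) _ _ HA H2) as [P' [? ?]];
          exists (TG Q); split; [apply rt_refl|];
          eapply D_g; [eapply rt_trans; [exact H1|eauto] | eauto | eauto | eauto] end.
    + match goal with H : beta M2 _ |- _ => rename H into Hst end.
      inversion HD; subst.
      * match goal with H1 : D M1 ?A, H2 : D M2 ?B |- _ =>
          destruct (IHn M2 ltac:(lia) _ _ Hst H2) as [P' [? ?]];
          exists (TApp A P'); split; [apply tstar_appr; auto | constructor; auto] end.
      * simpl in Hs.
        match goal with H0 : tstar Q ?Q1, H1 : tstar Q ?Q2, H2 : D M2 ?Q2, H3 : D _ ?Q1 |- _ =>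
          destruct (IHn M2 ltac:(lia) _ _ Hst H2) as [P' [? ?]];
          exists (TG Q); split; [apply rt_refl|];
          eapply D_g; [exact H0 | eapply rt_trans; [exact H1|eauto] | exact H3 | eauto] end.
  - inversion Hb; subst. inversion HD; subst.
    match goal with H1 : beta M _, H2 : D M _ |- _ =>
      destruct (IHn M ltac:(lia) _ _ H1 H2) as [P' [? ?]] end.
    exists (TLam P'); split; [apply tstar_lam; auto | constructor; auto].
  - inversion Hb.
Qed.

Lemma D_star : forall M M', beta_star M M' -> forall P, D M P ->
  exists P', tstar P P' /\ D M' P'.
Proof.
  induction 1; intros P HD.
  - eapply D_step; eauto.
  - exists P; split; [apply rt_refl | auto].
  - destruct (IHclos_refl_trans1 P HD) as [P1 [? ?]].
    destruct (IHclos_refl_trans2 P1 H2) as [P2 [? ?]].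
    exists P2; split; [eapply rt_trans; eauto | auto].
Qed.

Fixpoint phi (P : tm) : term :=
  match P with
  | TVar n => Var n
  | TApp a b => App (phi a) (phi b)
  | TLam a => Lam (phi a)
  | TG a => App (App Mark (phi a)) (phi a)
  end.

Lemma phi_lift : forall P k c, phi (tlift k c P) = lift k c (phi P).
Proof. induction P; intros; simpl; try (f_equal; auto; fail). destruct (n <? c); auto.
  rewrite IHP; auto. Qed.

Lemma phi_subst : forall P U j, phi (tsubst j U P) = subst j (phi U) (phi P).
Proof. induction P; intros; simpl; try (f_equal; auto; fail).
  - destruct (n =? j); [apply phi_lift|]. destruct (j <? n); auto.
  - rewrite IHP; auto. Qed.

Lemma bs_appl : forall t t' u, beta_star t t' -> beta_star (App t u) (App t' u).
Proof. induction 1; [apply rt_step; constructor; auto | apply rt_refl | eapply rt_trans; eauto]. Qed.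
Lemma bs_appr : forall t u u', beta_star u u' -> beta_star (App t u) (App t u').
Proof. induction 1; [apply rt_step; constructor; auto | apply rt_refl | eapply rt_trans; eauto]. Qed.
Lemma bs_lam : forall t t', beta_star t t' -> beta_star (Lam t) (Lam t').
Proof. induction 1; [apply rt_step; constructor; auto | apply rt_refl | eapply rt_trans; eauto]. Qed.
Lemma bs_app : forall t t' u u', beta_star t t' -> beta_star u u' -> beta_star (App t u) (App t' u').
Proof. intros. eapply rt_trans; [apply bs_appl | apply bs_appr]; eauto. Qed.

Lemma phi_tbeta : forall P P', tbeta P P' -> beta_star (phi P) (phi P').
Proof.
  induction 1; simpl.
  - apply rt_step. rewrite phi_subst. constructor.
  - apply bs_appl; auto.
  - apply bs_appr; auto.
  - apply bs_lam; auto.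
  - apply bs_app; [apply bs_appr|]; auto.
Qed.

Lemma phi_tstar : forall P P', tstar P P' -> beta_star (phi P) (phi P').
Proof. induction 1; [apply phi_tbeta; auto | apply rt_refl | eapply rt_trans; eauto]. Qed.

Lemma D_phi : forall M P, D M P -> exists P', tstar P P' /\ beta_star M (phi P').
Proof.
  induction 1.
  - exists (TVar n); split; apply rt_refl.
  - destruct IHD1 as [A [? ?]], IHD2 as [B [? ?]].
    exists (TApp A B); split; [eapply rt_trans; [apply tstar_appl|apply tstar_appr]; eauto | apply bs_app; auto].
  - destruct IHD as [A [? ?]]. exists (TLam A); split; [apply tstar_lam | apply bs_lam]; auto.
  - destruct IHD1 as [A1 [? ?]], IHD2 as [A2 [? ?]].
    destruct (CR Q A1 (rt_trans _ _ _ _ _ H H3) A2 (rt_trans _ _ _ _ _ H0 H5)) as [Q3 [? ?]].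
    exists (TG Q3); split.
    + apply tstar_g. eapply rt_trans; [apply H|]. eapply rt_trans; eauto.
    + simpl. apply bs_app; [apply bs_appr|].
      * eapply rt_trans; [eauto | apply phi_tstar; auto].
      * eapply rt_trans; [eauto | apply phi_tstar; auto].
Qed.

Lemma phi_not_mark : forall P, phi P <> Mark.
Proof. destruct P; simpl; discriminate. Qed.

Lemma phi_not_appmark : forall P s, phi P <> App Mark s.
Proof. destruct P; simpl; intros s E; inversion E. apply (phi_not_mark P1); auto. Qed.

Lemma phi_balanced : forall P, balanced (phi P).
Proof.
  unfold balanced. induction P; simpl; intros s t H.
  - inversion H.
  - inversion H; subst; eauto. exfalso. apply (phi_not_appmark P1 s); auto.
  - inversion H; subst; eauto.
  - inversion H; subst; eauto.
    match goal with H2 : subterm _ (App Mark _) |- _ => inversion H2; subst; eauto end.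
    match goal with H2 : subterm _ Mark |- _ => inversion H2 end.
Qed.

Fixpoint iota (t : term) : tm :=
  match t with
  | Var n => TVar n
  | App a b => TApp (iota a) (iota b)
  | Lam a => TLam (iota a)
  | Mark => TVar 0
  end.

Lemma D_iota : forall t, has_mark t = false -> D t (iota t).
Proof.
  induction t; simpl; intros H; try constructor; auto; try discriminate.
  - apply Bool.orb_false_iff in H as [? ?]; auto.
  - apply Bool.orb_false_iff in H as [? ?]; auto.
Qed.

Theorem lemma5p4 (Y : term) :
  fixed_point_combinator Y -> has_mark Y = false ->
  forall M, beta_star (A_ Y) M -> exists N, beta_star M N /\ balanced N.
Proof.
  intros _ HY M HM.
  assert (H0 : D (A_ Y) (TApp (iota Y) (TLam (TG (TVar 0))))).
  { unfold A_. constructor; [apply D_iota; auto|]. constructor.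
    econstructor; [apply rt_refl | apply rt_refl | constructor | constructor]. }
  destruct (D_star _ _ HM _ H0) as [P [_ HP]].
  destruct (D_phi _ _ HP) as [P' [_ HP']].
  exists (phi P'); split; auto. apply phi_balanced.
Qed.
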